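(* Suppose $W^+$ is inverse S-shaped (with $W^+(0)=0$, $W^+(1)=1$). Then there exists a unique index $J'\in\{1,\dots,n^+\}$ such that $$h^+_{n^+}>h^+_{n^+-1}>\cdots>h^+_{J'}\quad\text{and}\quad h^+_{J'}\le h^+_{J'-1}<h^+_{J'-2}<\cdots<h^+_1$$ (such $J'$ is called the flexional index).
   Context: Fix $N\in\mathbb{N}$ and an integer $1\le n^+\le N$. A function $f:[0,1]\to\mathbb{R}$ is inverse S-shaped if it is strictly increasing, continuously differentiable, and there is $x_0\in[0,1]$ such that $f'$ is strictly decreasing on $[0,x_0]$ and strictly increasing on $[x_0,1]$. $W^+:[0,1]\to[0,1]$ is such a function with $W^+(0)=0$, $W^+(1)=1$, and $h^+_j:=W^+\!\left(\frac{n^+-j+1}{N}\right)-W^+\!\left(\frac{n^+-j}{N}\right)$ for $j=1,\dots,n^+$. Chains of inequalities with no terms are vacuous (e.g. the second chain when $J'=1$). *)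

(* Defs.v *)
From Stdlib Require Import Reals Lra Lia.
Open Scope R_scope.

Definition has_derivative_on_01 (f f' : R -> R) : Prop :=
  forall x, 0 <= x <= 1 ->
    forall eps, 0 < eps -> exists delta, 0 < delta /\
      forall y, 0 <= y <= 1 -> y <> x -> Rabs (y - x) < delta ->
        Rabs ((f y - f x) / (y - x) - f' x) < eps.

Definition continuous_on_01 (g : R -> R) : Prop :=
  forall x, 0 <= x <= 1 ->
    forall eps, 0 < eps -> exists delta, 0 < delta /\
      forall y, 0 <= y <= 1 -> Rabs (y - x) < delta -> Rabs (g y - g x) < eps.

Definition inverse_S_shaped (f : R -> R) : Prop :=
  (forall x y, 0 <= x -> x < y -> y <= 1 -> f x < f y) /\
  exists f' : R -> R,
    has_derivative_on_01 f f' /\ continuous_on_01 f' /\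
    exists x0, 0 <= x0 <= 1 /\
      (forall x y, 0 <= x -> x < y -> y <= x0 -> f' y < f' x) /\
      (forall x y, x0 <= x -> x < y -> y <= 1 -> f' x < f' y).

Definition hplus (W : R -> R) (N np j : nat) : R :=
  W (INR (np + 1 - j) / INR N) - W (INR (np - j) / INR N).

(* Main.v *)
Require Import Defs.
From Stdlib Require Import Reals Lra Lia Classical Arith.
Open Scope R_scope.

Definition clamp (x : R) := Rmax 0 (Rmin 1 x).

Lemma clamp_id x : 0 <= x <= 1 -> clamp x = x.
Proof. intros. unfold clamp, Rmax, Rmin; repeat destruct Rle_dec; lra. Qed.

Lemma clamp_in x : 0 <= clamp x <= 1.
Proof. unfold clamp, Rmax, Rmin; repeat destruct Rle_dec; lra. Qed.

Lemma clamp_lip x y : 0 <= x <= 1 -> Rabs (clamp y - x) <= Rabs (y - x).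
Proof.
  intros. unfold clamp, Rmax, Rmin; repeat destruct Rle_dec;
  unfold Rabs; repeat destruct Rcase_abs; lra.
Qed.

Lemma W_cont W W' : has_derivative_on_01 W W' -> forall x, 0 <= x <= 1 ->
  forall eps, 0 < eps -> exists delta, 0 < delta /\
  forall y, 0 <= y <= 1 -> Rabs (y - x) < delta -> Rabs (W y - W x) < eps.
Proof.
  intros HD x Hx eps He.
  destruct (HD x Hx 1 Rlt_0_1) as [d0 [Hd0 Hd]].
  assert (HA : 0 < Rabs (W' x) + 1) by (pose proof (Rabs_pos (W' x)); lra).
  exists (Rmin d0 (eps / (Rabs (W' x) + 1))). split.
  { apply Rmin_glb_lt; [lra|]. apply Rdiv_lt_0_compat; lra. }
  intros y Hy Hyx.
  destruct (Req_dec y x) as [->|Hne].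
  { replace (W x - W x) with 0 by ring. rewrite Rabs_R0. lra. }
  assert (H1 : Rabs (y - x) < d0) by (eapply Rlt_le_trans; [exact Hyx| apply Rmin_l]).
  assert (H2 : Rabs (y - x) < eps / (Rabs (W' x) + 1))
    by (eapply Rlt_le_trans; [exact Hyx| apply Rmin_r]).
  specialize (Hd y Hy Hne H1).
  set (q := (W y - W x) / (y - x)) in *.
  assert (Hq : Rabs q < Rabs (W' x) + 1).
  { pose proof (Rabs_triang (q - W' x) (W' x)). replace (q - W' x + W' x) with q in H by ring. lra. }
  assert (Heq : W y - W x = q * (y - x)).
  { unfold q. field. lra. }
  rewrite Heq, Rabs_mult.
  assert (Hp : 0 < Rabs (y - x)) by (apply Rabs_pos_lt; lra).
  apply Rlt_le_trans with ((Rabs (W' x) + 1) * Rabs (y - x)).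
  { apply Rmult_lt_compat_r; lra. }
  apply Rle_trans with ((Rabs (W' x) + 1) * (eps / (Rabs (W' x) + 1))).
  { apply Rmult_le_compat_l; lra. }
  right. field. lra.
Qed.

Lemma G_cont W W' : has_derivative_on_01 W W' -> forall x, 0 <= x <= 1 ->
  continuity_pt (fun t => W (clamp t)) x.
Proof.
  intros HD x Hx. unfold continuity_pt, continue_in, limit1_in, limit_in. simpl.
  intros eps He. destruct (W_cont W W' HD x Hx eps He) as [d [Hd H]].
  exists d. split; [lra|]. intros y [_ Hy]. unfold R_dist in *.
  rewrite (clamp_id x Hx). apply H. apply clamp_in.
  eapply Rle_lt_trans; [apply clamp_lip; exact Hx | exact Hy].
Qed.

Lemma G_deriv W W' : has_derivative_on_01 W W' -> forall x, 0 < x < 1 ->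
  derivable_pt_lim (fun t => W (clamp t)) x (W' x).
Proof.
  intros HD x Hx eps He.
  destruct (HD x ltac:(lra) eps He) as [d [Hd H]].
  assert (Hp : 0 < Rmin d (Rmin x (1 - x))).
  { repeat apply Rmin_glb_lt; lra. }
  exists (mkposreal _ Hp). simpl. intros h Hh0 Hh.
  assert (A1 : Rabs h < d) by (eapply Rlt_le_trans; [exact Hh| apply Rmin_l]).
  assert (A2 : Rabs h < Rmin x (1 - x)) by (eapply Rlt_le_trans; [exact Hh| apply Rmin_r]).
  assert (A3 : Rabs h < x) by (eapply Rlt_le_trans; [exact A2| apply Rmin_l]).
  assert (A4 : Rabs h < 1 - x) by (eapply Rlt_le_trans; [exact A2| apply Rmin_r]).
  apply Rabs_def2 in A3. apply Rabs_def2 in A4.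
  rewrite (clamp_id (x + h)) by lra. rewrite (clamp_id x) by lra.
  specialize (H (x + h) ltac:(lra) ltac:(lra)).
  replace (x + h - x) with h in H by ring. apply H. exact A1.
Qed.

Lemma MVT_W W W' : has_derivative_on_01 W W' -> forall a b, 0 <= a -> a < b -> b <= 1 ->
  exists c, a < c < b /\ W b - W a = W' c * (b - a).
Proof.
  intros HD a b Ha Hab Hb.
  set (G := fun t => W (clamp t)).
  assert (pr1 : forall c, a < c < b -> derivable_pt G c).
  { intros c Hc. exists (W' c). apply (G_deriv W W' HD). lra. }
  destruct (MVT G id a b pr1 (fun c _ => derivable_pt_id c) Hab) as [c [P Hc]].
  { intros c Hc. apply (G_cont W W' HD). lra. }
  { intros c Hc. apply derivable_continuous_pt, derivable_pt_id. }
  exists c. split; [exact P|].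
  rewrite derive_pt_id in Hc.
  assert (E : derive_pt G c (pr1 c P) = W' c).
  { apply derive_pt_eq_0. apply (G_deriv W W' HD). lra. }
  rewrite E in Hc. unfold G, id in Hc.
  rewrite (clamp_id a), (clamp_id b) in Hc by lra. lra.
Qed.

Lemma key_real W : inverse_S_shaped W -> forall t0 h, 0 <= t0 -> 0 < h -> t0 + 3 * h <= 1 ->
  W (t0 + h) - W t0 <= W (t0 + 2 * h) - W (t0 + h) ->
  W (t0 + 2 * h) - W (t0 + h) < W (t0 + 3 * h) - W (t0 + 2 * h).
Proof.
  intros [_ [W' [HD [_ [x0 [Hx0 [Hdec Hinc]]]]]]] t0 h Ht0 Hh Ht3 Hle.
  destruct (Rle_lt_dec (t0 + 2 * h) x0) as [C1|C1].
  - destruct (MVT_W W W' HD t0 (t0 + h)) as [c0 [Pc0 E0]]; try lra.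
    destruct (MVT_W W W' HD (t0 + h) (t0 + 2 * h)) as [c1 [Pc1 E1]]; try lra.
    assert (W' c1 < W' c0) by (apply Hdec; lra).
    replace (t0 + h - t0) with h in E0 by ring.
    replace (t0 + 2 * h - (t0 + h)) with h in E1 by ring.
    exfalso. nra.
  - destruct (Rle_lt_dec x0 (t0 + h)) as [C2|C2].
    + destruct (MVT_W W W' HD (t0 + h) (t0 + 2 * h)) as [c1 [Pc1 E1]]; try lra.
      destruct (MVT_W W W' HD (t0 + 2 * h) (t0 + 3 * h)) as [c2 [Pc2 E2]]; try lra.
      assert (W' c1 < W' c2) by (apply Hinc; lra).
      replace (t0 + 2 * h - (t0 + h)) with h in E1 by ring.
      replace (t0 + 3 * h - (t0 + 2 * h)) with h in E2 by ring.
      nra.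
    + destruct (MVT_W W W' HD t0 (t0 + h)) as [c0 [Pc0 E0]]; try lra.
      destruct (MVT_W W W' HD (t0 + h) x0) as [cL [PcL EL]]; try lra.
      destruct (MVT_W W W' HD x0 (t0 + 2 * h)) as [cR [PcR ER]]; try lra.
      destruct (MVT_W W W' HD (t0 + 2 * h) (t0 + 3 * h)) as [c2 [Pc2 E2]]; try lra.
      assert (W' cL < W' c0) by (apply Hdec; lra).
      assert (W' cR < W' c2) by (apply Hinc; lra).
      replace (t0 + h - t0) with h in E0 by ring.
      replace (t0 + 3 * h - (t0 + 2 * h)) with h in E2 by ring.
      set (al := x0 - (t0 + h)) in *. set (be := t0 + 2 * h - x0) in *.
      assert (Hal : 0 < al) by (unfold al; lra).
      assert (Hbe : 0 < be) by (unfold be; lra).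
      assert (Hs : al + be = h) by (unfold al, be; ring).
      assert (D1 : W (t0 + 2 * h) - W (t0 + h) = al * W' cL + be * W' cR) by lra.
      assert (W' cR > W' c0) by nra.
      nra.
Qed.

Lemma key_h W N np j : inverse_S_shaped W -> (1 <= j)%nat -> (j + 2 <= np)%nat -> (np <= N)%nat ->
  hplus W N np (S (S j)) <= hplus W N np (S j) -> hplus W N np (S j) < hplus W N np j.
Proof.
  intros HS Hj Hjn HnN H. unfold hplus in *.
  set (k := (np - j - 2)%nat).
  replace (np + 1 - S (S j))%nat with (k + 1)%nat in H by (unfold k; lia).
  replace (np - S (S j))%nat with k in H by (unfold k; lia).
  replace (np + 1 - S j)%nat with (k + 2)%nat in * by (unfold k; lia).
  replace (np - S j)%nat with (k + 1)%nat in * by (unfold k; lia).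
  replace (np + 1 - j)%nat with (k + 3)%nat by (unfold k; lia).
  replace (np - j)%nat with (k + 2)%nat by (unfold k; lia).
  assert (HN : 0 < INR N) by (apply lt_0_INR; lia).
  assert (Hk : (k + 3 <= N)%nat) by (unfold k; lia).
  apply le_INR in Hk. rewrite plus_INR in Hk. simpl in Hk.
  rewrite !plus_INR in *. simpl INR in *.
  set (t0 := INR k / INR N). set (h := 1 / INR N).
  replace ((INR k + 1) / INR N) with (t0 + h) in * by (unfold t0, h; field; lra).
  replace ((INR k + (1 + 1)) / INR N) with (t0 + 2 * h) in * by (unfold t0, h; field; lra).
  replace ((INR k + (1 + 1 + 1)) / INR N) with (t0 + 3 * h) in * by (unfold t0, h; field; lra).
  apply (key_real W HS t0 h).
  - unfold t0. unfold Rdiv. apply Rmult_le_pos; [apply pos_INR | left; apply Rinv_0_lt_compat; lra].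
  - unfold h. apply Rdiv_lt_0_compat; lra.
  - unfold t0, h. replace (INR k / INR N + 3 * (1 / INR N)) with ((INR k + 3) / INR N) by (field; lra).
    apply Rmult_le_reg_r with (INR N); [lra|]. unfold Rdiv. rewrite Rmult_assoc, Rinv_l by lra. lra.
  - exact H.
Qed.

Section Main.
Variables (W : R -> R) (N np : nat).
Hypothesis HS : inverse_S_shaped W.
Hypothesis HnpN : (np <= N)%nat.
Let D j := hplus W N np (S j) > hplus W N np j.

Lemma exist_J : forall n, (1 <= n <= np)%nat -> (forall j, (n <= j)%nat -> (j < np)%nat -> D j) ->
  exists J, (1 <= J <= np)%nat /\ (forall j, (J <= j)%nat -> (j < np)%nat -> D j) /\
     ((2 <= J)%nat -> ~ D (J - 1)%nat).
Proof.
  induction n as [|n IH]; intros Hn Hall; [lia|].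
  destruct (le_lt_dec 2 (S n)) as [H2|H2].
  - destruct (classic (D n)) as [Dn|nDn].
    + apply IH; [lia|]. intros j Hj Hjn.
      destruct (Nat.eq_dec j n) as [->|]; [exact Dn| apply Hall; lia].
    + exists (S n). split; [exact Hn|]. split; [exact Hall|].
      intros _. replace (S n - 1)%nat with n by lia. exact nDn.
  - exists (S n). split; [exact Hn|]. split; [exact Hall| intros; lia].
Qed.

Lemma down : forall m, (1 <= m)%nat -> (m < np)%nat -> ~ D m ->
  forall i, (1 <= i <= m)%nat -> ~ D i.
Proof.
  induction m as [|m IH]; intros H1 H2 Hn i Hi; [lia|].
  destruct (Nat.eq_dec i (S m)) as [->|Hne]; [exact Hn|].
  apply IH; try lia.
  unfold D in *. apply Rle_not_lt.
  left. apply key_h; try lia; auto. apply Rnot_lt_le. exact Hn.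
Qed.
End Main.

Theorem lemma1 (N np : nat) (W : R -> R)
  (Hnp1 : (1 <= np)%nat) (HnpN : (np <= N)%nat)
  (HS : inverse_S_shaped W) (HW0 : W 0 = 0) (HW1 : W 1 = 1) :
  exists! J : nat, (1 <= J <= np)%nat /\
    (* h_{n+} > h_{n+-1} > ... > h_{J} *)
    (forall j, (J <= j)%nat -> (j < np)%nat ->
        hplus W N np (S j) > hplus W N np j) /\
    (* h_{J} <= h_{J-1}  (only when J >= 2) *)
    ((2 <= J)%nat -> hplus W N np J <= hplus W N np (J - 1)) /\
    (* h_{J-1} < h_{J-2} < ... < h_1 *)
    (forall j, (1 <= j)%nat -> (j + 2 <= J)%nat ->
        hplus W N np (S j) < hplus W N np j).
Proof.
  assert (Hall : forall j, (np <= j)%nat -> (j < np)%nat ->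
     hplus W N np (S j) > hplus W N np j) by (intros; lia).
  destruct (exist_J W N np HnpN np ltac:(lia) Hall) as [J [HJ [HA HB]]].
  exists J. split.
  - split; [exact HJ|]. split; [exact HA|]. split.
    + intros H2. specialize (HB H2). apply Rnot_lt_le.
      replace (S (J - 1)) with J in HB by lia. exact HB.
    + intros j Hj1 Hj2.
      assert (HB' := HB ltac:(lia)).
      assert (nD := down W N np HS HnpN (J - 1) ltac:(lia) ltac:(lia) HB' (S j) ltac:(lia)).
      apply key_h; try lia; auto. apply Rnot_lt_le. exact nD.
  - intros J' [HJ' [HA' [HB' _]]].
    destruct (lt_eq_lt_dec J J') as [[Hlt|Heq]|Hgt]; [|exact Heq|].
    + exfalso. specialize (HB' ltac:(lia)). apply (Rle_not_lt _ _ HB').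
      assert (X := HA (J' - 1)%nat ltac:(lia) ltac:(lia)).
      replace (S (J' - 1)) with J' in X by lia. exact X.
    + exfalso. specialize (HB ltac:(lia)). apply HB.
      assert (X := HA' (J - 1)%nat ltac:(lia) ltac:(lia)). exact X.
Qed.
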